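(* Fix $x_0\in(-2,2)$ and $0<\alpha<1$. Let $N\in\mathbb{N}$, $\eta_1,\dots,\eta_N\in\mathbb{C}$ with $\operatorname{Im}\eta_j>0$, $c_1,\dots,c_N\in\mathbb{R}$, $\lambda_j=x_0+\eta_j/n^\alpha$ and $\phi^{(n)}=\frac{1}{n^\alpha}\sum_{j=1}^Nc_ja_{\lambda_j}$. Then $$\lim_{n\to\infty}\operatorname{Tr}H(\phi^{(n)})H(\tilde\phi^{(n)})=-\frac12\sum_{i,j=1}^Nc_ic_j\operatorname{Re}\frac{1}{(\eta_i-\overline{\eta_j})^2},$$ uniformly for $c_j$ in compact subsets of $\mathbb{R}$ and $\eta_j$ in compact subsets of the upper half-plane.
   Context: $\omega(\lambda)=\frac{\lambda-\sqrt{\lambda^2-4}}{2}$ on $\mathbb{C}\setminus[-2,2]$, branch analytic there with $\omega(\lambda)=O(1/\lambda)$ at infinity. For $\operatorname{Im}\lambda>0$, $a_\lambda(z)=\sum_{j\in\mathbb{Z}}\operatorname{Im}\left(\frac{\omega(\lambda)^{|j|}}{\omega(\lambda)-\omega(\lambda)^{-1}}\right)z^j$. For a Laurent series $\phi=\sum\phi_kz^k$, $H(\phi)_{j,k}=\phi_{j+k-1}$ ($j,k\ge1$) is the Hankel matrix and $\tilde\phi(z)=\phi(1/z)$. *)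

(* Defs.v *)
From Stdlib Require Import Reals ZArith List ClassicalEpsilon.
Open Scope R_scope.

Definition Cplx := (R * R)%type.
Definition Re (z : Cplx) : R := fst z.
Definition Im (z : Cplx) : R := snd z.
Definition RtoC (x : R) : Cplx := (x, 0).
Definition Cadd (z w : Cplx) : Cplx := (Re z + Re w, Im z + Im w).
Definition Copp (z : Cplx) : Cplx := (- Re z, - Im z).
Definition Csub (z w : Cplx) : Cplx := Cadd z (Copp w).
Definition Cmul (z w : Cplx) : Cplx :=
  (Re z * Re w - Im z * Im w, Re z * Im w + Im z * Re w).
Definition Cnorm2 (z : Cplx) : R := Re z * Re z + Im z * Im z.
Definition Cinv (z : Cplx) : Cplx := (Re z / Cnorm2 z, - Im z / Cnorm2 z).
Definition Cdiv (z w : Cplx) : Cplx := Cmul z (Cinv w).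
Definition Cconj (z : Cplx) : Cplx := (Re z, - Im z).
Definition Cscale (r : R) (z : Cplx) : Cplx := (r * Re z, r * Im z).
Fixpoint Cpow (z : Cplx) (n : nat) : Cplx :=
  match n with O => (1, 0) | S m => Cmul z (Cpow z m) end.

(* omega(lambda) = (lambda - sqrt(lambda^2-4))/2, the branch on C \ [-2,2]
   with omega = O(1/lambda) at infinity.  It is the root of
   w^2 - lambda w + 1 = 0 lying in the open unit disc (the other root is 1/w).
   We define it as that root (chosen by epsilon; unique for lambda off [-2,2]). *)
Definition omega_spec (l w : Cplx) : Prop :=
  Cadd (Csub (Cmul w w) (Cmul l w)) (1, 0) = (0, 0) /\ Cnorm2 w < 1.
Definition omega (l : Cplx) : Cplx := epsilon (inhabits (0, 0)) (omega_spec l).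

Definition a_coef (l : Cplx) (j : Z) : R :=
  let w := omega l in Im (Cdiv (Cpow w (Z.abs_nat j)) (Csub w (Cinv w))).

Definition fsum (N : nat) (f : nat -> R) : R :=
  fold_right Rplus 0 (map f (seq 0 N)).

(* Tr H(phi) H(tilde phi) = t, with H(phi)_{j,k} = phi_{j+k-1} (j,k >= 1),
   tilde phi_m = phi_{-m}; indices shifted to start at 0:
   the diagonal entry j of the product is sum_k H(phi)_{j,k} H(tilde phi)_{k,j}
   and the trace is the sum of the diagonal entries (both as convergent series). *)
Definition hankel_trace_is (phi : Z -> R) (t : R) : Prop :=
  exists d : nat -> R,
    (forall j : nat,
        infinite_sum
          (fun k : nat => phi (Z.of_nat (j + k + 1)) * phi (- Z.of_nat (k + j + 1))%Z)
          (d j)) /\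
    infinite_sum d t.

Definition phi_n (x0 alpha : R) (N : nat) (c : nat -> R) (eta : nat -> Cplx)
  (n : nat) (k : Z) : R :=
  / Rpower (INR n) alpha *
  fsum N (fun j => c j * a_coef (Cadd (RtoC x0) (Cscale (/ Rpower (INR n) alpha) (eta j))) k).

Definition limit_value (N : nat) (c : nat -> R) (eta : nat -> Cplx) : R :=
  - (1/2) * fsum N (fun i => fsum N (fun j =>
      c i * c j * Re (Cinv (Cpow (Csub (eta i) (Cconj (eta j))) 2)))).

(* Main.v *)
Require Import Defs.
From Stdlib Require Import Reals ZArith List ClassicalEpsilon Lra Lia Psatz.
From Coquelicot Require Complex.
Open Scope R_scope.

Module CX.
Import Complex.

Lemma L_add z w : Defs.Cadd z w = (z + w)%C. Proof. reflexivity. Qed.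
Lemma L_sub z w : Defs.Csub z w = (z - w)%C. Proof. reflexivity. Qed.
Lemma L_mul z w : Defs.Cmul z w = (z * w)%C. Proof. reflexivity. Qed.
Lemma L_conj z : Defs.Cconj z = Cconj z. Proof. reflexivity. Qed.
Lemma L_RtoC x : Defs.RtoC x = RtoC x. Proof. reflexivity. Qed.
Lemma L_Re z : Defs.Re z = Re z. Proof. reflexivity. Qed.
Lemma L_Im z : Defs.Im z = Im z. Proof. reflexivity. Qed.
Lemma L_inv z : Defs.Cinv z = (/ z)%C.
Proof. destruct z as [a b]; unfold Defs.Cinv, Defs.Cnorm2, Cinv; simpl.
  replace (a*(a*1) + b*(b*1)) with (a*a+b*b) by ring. reflexivity. Qed.
Lemma L_div z w : Defs.Cdiv z w = (z / w)%C.
Proof. unfold Defs.Cdiv, Cdiv. rewrite L_inv. reflexivity. Qed.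
Lemma L_pow z n : Defs.Cpow z n = (z ^ n)%C.
Proof. induction n; simpl; [reflexivity| rewrite IHn; reflexivity]. Qed.
Lemma L_scale r z : Defs.Cscale r z = (RtoC r * z)%C.
Proof. destruct z as [a b]; unfold Defs.Cscale, Cmult, RtoC; simpl; f_equal; ring. Qed.
Lemma L_norm2 z : Defs.Cnorm2 z = Cmod z ^ 2.
Proof. destruct z; rewrite Cmod2_alt. unfold Defs.Cnorm2, Defs.Re, Defs.Im, Re, Im; simpl. ring. Qed.

Lemma csqrt_ex (z : C) : exists r : C, (r * r)%C = z.
Proof.
  destruct z as [a b].
  set (m := sqrt (a^2 + b^2)).
  assert (Hm0 : 0 <= m) by apply sqrt_pos.
  assert (Hm2 : m * m = a^2 + b^2) by (apply sqrt_sqrt; nra).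
  assert (Ha1 : Rabs a <= m).
  { unfold Rabs; destruct Rcase_abs; nra. }
  assert (Hp : 0 <= (m + a)/2) by (revert Ha1; unfold Rabs; destruct Rcase_abs; lra).
  assert (Hq : 0 <= (m - a)/2) by (revert Ha1; unfold Rabs; destruct Rcase_abs; lra).
  set (x := sqrt ((m + a)/2)). set (y := sqrt ((m - a)/2)).
  assert (Hx : x * x = (m+a)/2) by (apply sqrt_sqrt; auto).
  assert (Hy : y * y = (m-a)/2) by (apply sqrt_sqrt; auto).
  assert (Hx0 : 0 <= x) by apply sqrt_pos.
  assert (Hy0 : 0 <= y) by apply sqrt_pos.
  assert (Hxy : x * y = Rabs b / 2).
  { apply Rsqr_inj. nra. apply Rmult_le_pos; [apply Rabs_pos|lra].
    unfold Rsqr. replace (x*y*(x*y)) with ((x*x)*(y*y)) by ring. rewrite Hx, Hy.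
    replace (Rabs b / 2 * (Rabs b / 2)) with ((Rabs b * Rabs b)/4) by field.
    rewrite <- Rabs_mult, Rabs_pos_eq by nra. nra. }
  destruct (Rle_or_lt 0 b) as [Hb|Hb].
  - exists (x, y). unfold Cmult; simpl. rewrite Rabs_pos_eq in Hxy by lra. f_equal; nra.
  - exists (x, -y). unfold Cmult; simpl. rewrite Rabs_left in Hxy by lra. f_equal; nra.
Qed.

Lemma C2nz : RtoC 2 <> 0%C.
Proof. intro H. injection H. lra. Qed.

Lemma omega_ex (l : C) : 0 < Im l -> exists w, Defs.omega_spec l w.
Proof.
  intro Hl.
  destruct (csqrt_ex (l*l - 4)%C) as [r Hr].
  set (w1 := ((l + r)/2)%C). set (w2 := ((l - r)/2)%C).
  assert (H12 : (w1 * w2)%C = 1%C).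
  { unfold w1, w2. replace (((l + r) / 2) * ((l - r) / 2))%C with ((l*l - r*r)/4)%C.
    rewrite Hr. field. field. }
  assert (Hs : (w1 + w2)%C = l).
  { unfold w1, w2. field. }
  assert (Hroot : forall w, (w = w1 \/ w = w2) -> (w*w - l*w + 1)%C = 0%C).
  { intros w Hw. rewrite <- Hs, <- H12.
    replace (w * w - (w1 + w2) * w + w1 * w2)%C with ((w - w1)*(w - w2))%C by ring.
    destruct Hw as [-> | ->]; ring. }
  assert (Hm : Cmod w1 * Cmod w2 = 1) by (rewrite <- Cmod_mult, H12; apply Cmod_1).
  assert (Hspec : forall w, (w = w1 \/ w = w2) -> Cmod w < 1 -> Defs.omega_spec l w).
  { intros w Hw Hc. unfold Defs.omega_spec. rewrite L_norm2, L_add, L_sub, !L_mul. split.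
    - change (1,0) with (RtoC 1). change (0,0) with (RtoC 0). apply Hroot; auto.
    - pose proof (Cmod_ge_0 w). simpl. nra. }
  pose proof (Cmod_ge_0 w1). pose proof (Cmod_ge_0 w2).
  destruct (Rtotal_order (Cmod w1) 1) as [Hlt|[Heq|Hgt]].
  - exists w1. apply Hspec; auto.
  - exfalso.
    assert (Hw1 : w1 <> 0%C) by (intro E; rewrite E, Cmod_0 in Heq; lra).
    assert (Hc : (w1 * Cconj w1)%C = 1%C).
    { rewrite <- Cmod2_conj, Heq. simpl. unfold RtoC. f_equal; ring. }
    assert (Hw2 : w2 = Cconj w1).
    { replace w2 with (/ w1 * (w1 * w2))%C by (field; auto).
      rewrite H12, <- Hc. field. auto. }
    rewrite <- Hs, Hw2 in Hl. destruct w1 as [a b]. simpl in Hl. lra.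
  - exists w2. apply Hspec; auto. nra.
Qed.

Lemma omega_props (l : C) : 0 < Im l ->
  let w : C := Defs.omega l in (w*w - l*w + 1)%C = 0%C /\ Cmod w < 1.
Proof.
  intros Hl w.
  assert (H : Defs.omega_spec l w) by
    (unfold w, Defs.omega; apply epsilon_spec; apply omega_ex; auto).
  unfold Defs.omega_spec in H. rewrite L_norm2, L_add, L_sub, !L_mul in H.
  destruct H as [H1 H2]. split.
  - exact H1.
  - pose proof (Cmod_ge_0 w). simpl in H2. nra.
Qed.

Lemma omega_facts (l : C) : 0 < Im l ->
  let w : C := Defs.omega l in
  w <> 0%C /\ l = (w + / w)%C /\ Im w < 0 /\ Cmod w < 1 /\ (w*w - l*w + 1)%C = 0%C.
Proof.
  intros Hl w. destruct (omega_props l Hl) as [H1 H2]. fold w in H1, H2.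
  assert (Hw : w <> 0%C).
  { intro E. rewrite E in H1. injection H1. intros. lra. }
  assert (Hl2 : l = (w + / w)%C).
  { replace (w + / w)%C with (l + (w*w - l*w + 1)/w)%C by (field; auto).
    rewrite H1. field. auto. }
  repeat split; auto.
  assert (Hn : Cmod w ^ 2 < 1) by (pose proof (Cmod_ge_0 w); nra).
  rewrite Cmod2_alt in Hn.
  assert (Hp : 0 < Re w ^ 2 + Im w ^ 2).
  { rewrite <- Cmod2_alt. apply Cmod_gt_0 in Hw. nra. }
  rewrite Hl2 in Hl. destruct w as [a b]. unfold Re, Im in *. simpl in *.
  set (rho := a*(a*1) + b*(b*1)) in *.
  assert (E : b + - b / rho = b * (rho - 1) / rho) by (field; lra).
  rewrite E in Hl.
  apply Rmult_lt_compat_r with (r := rho) in Hl; [|lra].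
  unfold Rdiv in Hl. rewrite Rmult_assoc, Rinv_l, Rmult_1_r in Hl by lra. nra.
Qed.

Lemma im_le_Cmod (c : C) : Rabs (Im c) <= Cmod c.
Proof.
  destruct c as [a b]. unfold Cmod, Im; simpl.
  rewrite <- sqrt_Rsqr_abs. apply sqrt_le_1_alt. unfold Rsqr. nra.
Qed.

Lemma Cmod_lower (a b : C) : Cmod a - Cmod (a - b) <= Cmod b.
Proof.
  replace a with (b + (a - b))%C at 1 by ring.
  pose proof (Cmod_triangle b (a - b)). lra.
Qed.

Definition Dx (x0 : R) := sqrt (4 - x0*x0).
Definition om0 (x0 : R) : C := (x0/2, - Dx x0 / 2).

Lemma Dx_sq x0 : -2 < x0 < 2 -> Dx x0 * Dx x0 = 4 - x0*x0 /\ 0 < Dx x0.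
Proof. intro H. unfold Dx. split. apply sqrt_sqrt; nra. apply sqrt_lt_R0; nra. Qed.

Lemma Cmod_eq_of_sq (c : C) (d : R) : 0 <= d -> Cmod c ^ 2 = d * d -> Cmod c = d.
Proof. intros Hd H. pose proof (Cmod_ge_0 c). apply Rsqr_inj; auto. unfold Rsqr. nra. Qed.

Lemma om0_facts x0 : -2 < x0 < 2 ->
  (om0 x0 + Cconj (om0 x0))%C = RtoC x0 /\ (om0 x0 * Cconj (om0 x0))%C = 1%C /\
  Cmod (om0 x0) = 1 /\ Cmod (1 - om0 x0 * om0 x0)%C = Dx x0.
Proof.
  intro H. destruct (Dx_sq x0 H) as [HD HD0].
  unfold om0. repeat split.
  - unfold Cplus, Cconj, RtoC; simpl. f_equal; field.
  - unfold Cmult, Cconj, RtoC; simpl. f_equal; nra.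
  - apply Cmod_eq_of_sq; [lra|]. rewrite Cmod2_alt. unfold Re, Im; simpl. nra.
  - apply Cmod_eq_of_sq; [lra|]. rewrite Cmod2_alt. unfold Re, Im; simpl. nra.
Qed.

Lemma w_close (x0 : R) (l : C) : -2 < x0 < 2 -> 0 < Im l ->
  Cmod (Defs.omega l - om0 x0)%C * (Dx x0 / 2) <= Cmod (l - RtoC x0)%C.
Proof.
  intros Hx Hl. destruct (omega_facts l Hl) as [Hw [Hl2 [Him [Hmod Hroot]]]].
  set (w := (Defs.omega l : C)) in *.
  destruct (om0_facts x0 Hx) as [Hs [Hp _]].
  destruct (Dx_sq x0 Hx) as [HD HD0].
  set (o := om0 x0) in *.
  assert (E : ((w - o) * (w - Cconj o))%C = ((l - RtoC x0) * w)%C).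
  { replace ((w - o) * (w - Cconj o))%C with
      ((w*w - l*w + 1) + (l - RtoC x0)*w + (RtoC x0 - (o + Cconj o))*w + (o * Cconj o - 1))%C by ring.
    rewrite Hroot, Hs, Hp. ring. }
  apply (f_equal Cmod) in E. rewrite !Cmod_mult in E.
  assert (Hb : Dx x0 / 2 <= Cmod (w - Cconj o)%C).
  { eapply Rle_trans; [|apply im_le_Cmod].
    unfold o, om0, Cconj, Cminus, Cplus, Copp, Im in *; simpl in *.
    rewrite Rabs_left; lra. }
  pose proof (Cmod_ge_0 (w - o)%C). pose proof (Cmod_ge_0 (l - RtoC x0)%C).
  pose proof (Cmod_ge_0 w).
  apply Rle_trans with (Cmod (w - o)%C * Cmod (w - Cconj o)%C).
  apply Rmult_le_compat_l; auto.
  rewrite E. nra.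
Qed.

Lemma near_facts (x0 : R) (l : C) : -2 < x0 < 2 -> 0 < Im l ->
  Cmod (l - RtoC x0)%C <= Dx x0 * Dx x0 / 8 ->
  Cmod (Defs.omega l - om0 x0)%C <= Dx x0 / 4 /\ Im (Defs.omega l) <= - (Dx x0 / 4).
Proof.
  intros Hx Hl Hc. pose proof (w_close x0 l Hx Hl) as H.
  destruct (Dx_sq x0 Hx) as [HD HD0].
  assert (He : Cmod (Defs.omega l - om0 x0)%C <= Dx x0 / 4).
  { apply Rmult_le_reg_r with (Dx x0 / 2). lra. nra. }
  split; auto.
  pose proof (im_le_Cmod (Defs.omega l - om0 x0)%C) as Hi.
  unfold om0, Cminus, Cplus, Copp, Im in *; simpl in *.
  revert Hi; unfold Rabs; destruct Rcase_abs; intros; lra.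
Qed.

Lemma pair_bound (x0 : R) (w1 w2 : C) : -2 < x0 < 2 ->
  Cmod (w1 - om0 x0)%C <= Dx x0 / 4 -> Cmod (w2 - om0 x0)%C <= Dx x0 / 4 ->
  Cmod w1 <= 1 -> Dx x0 / 2 <= Cmod (1 - w1 * w2)%C.
Proof.
  intros Hx H1 H2 Hm1. destruct (om0_facts x0 Hx) as [_ [_ [Ho HD]]].
  set (o := om0 x0) in *.
  pose proof (Cmod_lower (1 - o*o)%C (1 - w1*w2)%C) as L.
  replace ((1 - o*o) - (1 - w1*w2))%C with (w1 * (w2 - o) + o * (w1 - o))%C in L by ring.
  pose proof (Cmod_triangle (w1 * (w2 - o))%C (o * (w1 - o))%C).
  rewrite !Cmod_mult, Ho in H. rewrite HD in L.
  pose proof (Cmod_ge_0 w1). pose proof (Cmod_ge_0 (w2 - o)%C). nra.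
Qed.

Lemma is_ext (f g : nat -> R) (l : R) :
  (forall k, f k = g k) -> infinite_sum f l -> infinite_sum g l.
Proof.
  intros E H eps He. destruct (H eps He) as [N0 HN]. exists N0. intros n Hn.
  rewrite (sum_eq g f) by (intros; auto). auto.
Qed.

Lemma is_plus (f g : nat -> R) (a b : R) :
  infinite_sum f a -> infinite_sum g b -> infinite_sum (fun k => f k + g k) (a + b).
Proof.
  intros Hf Hg eps He.
  destruct (Hf (eps/2)) as [N1 H1]; [lra|]. destruct (Hg (eps/2)) as [N2 H2]; [lra|].
  exists (max N1 N2). intros n Hn. rewrite plus_sum.
  eapply Rle_lt_trans; [apply Rdist_plus|].
  specialize (H1 n ltac:(lia)). specialize (H2 n ltac:(lia)). lra.
Qed.

Lemma is_zero : infinite_sum (fun _ => 0) 0.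
Proof.
  intros eps He. exists 0%nat. intros n _.
  assert (E : sum_f_R0 (fun _ => 0) n = 0).
  { induction n; simpl; [reflexivity| rewrite IHn; ring]. }
  rewrite E, Rdist_eq. lra.
Qed.

Lemma fold_plus (l : list R) (a : R) : fold_right Rplus a l = fold_right Rplus 0 l + a.
Proof. induction l; simpl; [ring| rewrite IHl; ring]. Qed.

Lemma fsum_S N f : Defs.fsum (S N) f = Defs.fsum N f + f N.
Proof.
  unfold Defs.fsum. rewrite seq_S, map_app, fold_right_app. simpl.
  rewrite fold_plus. ring.
Qed.

Lemma fsum_0 f : Defs.fsum 0 f = 0.
Proof. reflexivity. Qed.

Lemma fsum_ext N f g : (forall i, (i < N)%nat -> f i = g i) -> Defs.fsum N f = Defs.fsum N g.
Proof.
  induction N; intros H; [reflexivity|]. rewrite !fsum_S, IHN, H; auto.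
Qed.

Lemma is_fsum (N : nat) (F : nat -> nat -> R) (L : nat -> R) :
  (forall i, (i < N)%nat -> infinite_sum (F i) (L i)) ->
  infinite_sum (fun k => Defs.fsum N (fun i => F i k)) (Defs.fsum N L).
Proof.
  induction N; intros H.
  - apply (is_ext (fun _ => 0)); [intros; reflexivity| apply is_zero].
  - rewrite fsum_S. apply (is_ext (fun k => Defs.fsum N (fun i => F i k) + F N k)).
    { intros; rewrite fsum_S; reflexivity. }
    apply is_plus; auto.
Qed.

Lemma fsum_plus N f g : Defs.fsum N f + Defs.fsum N g = Defs.fsum N (fun i => f i + g i).
Proof. induction N; [rewrite !fsum_0; ring|]. rewrite !fsum_S, <- IHN. ring. Qed.

Lemma fsum_scal N r f : r * Defs.fsum N f = Defs.fsum N (fun i => r * f i).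
Proof. induction N; [rewrite !fsum_0; ring|]. rewrite !fsum_S, <- IHN. ring. Qed.

Lemma fsum_minus N f g : Defs.fsum N f - Defs.fsum N g = Defs.fsum N (fun i => f i - g i).
Proof. induction N; [rewrite !fsum_0; ring|]. rewrite !fsum_S, <- IHN. ring. Qed.

Lemma fsum_mul N f g : Defs.fsum N f * Defs.fsum N g =
  Defs.fsum N (fun i => Defs.fsum N (fun l => f i * g l)).
Proof.
  rewrite Rmult_comm, fsum_scal. apply fsum_ext. intros i _.
  rewrite Rmult_comm, fsum_scal. reflexivity.
Qed.

Lemma fsum_bound N f B : (forall i, (i < N)%nat -> Rabs (f i) <= B) ->
  Rabs (Defs.fsum N f) <= INR N * B.
Proof.
  induction N; intros H.
  - rewrite fsum_0, Rabs_R0. simpl. lra.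
  - rewrite fsum_S, S_INR. eapply Rle_trans; [apply Rabs_triang|].
    assert (IH := IHN (fun i Hi => H i ltac:(lia))). specialize (H N ltac:(lia)). lra.
Qed.

Lemma Re_add (a b : C) : Re (a + b)%C = Re a + Re b.
Proof. reflexivity. Qed.

Lemma Re_minus (a b : C) : Re (a - b)%C = Re a - Re b.
Proof. reflexivity. Qed.

Lemma geom (X q : C) : Cmod q < 1 ->
  infinite_sum (fun k => Re (X * q ^ k)%C) (Re (X / (1 - q))%C).
Proof.
  intro Hq.
  assert (Hq1 : (1 - q)%C <> 0%C).
  { intro E. assert (q = 1%C) by (replace q with (1 - (1 - q))%C by ring; rewrite E; ring).
    subst q. rewrite Cmod_1 in Hq. lra. }
  assert (Hp : forall n, sum_f_R0 (fun k => Re (X * q ^ k)%C) n =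
                          Re (X * (1 - q ^ (S n)) / (1 - q))%C).
  { induction n.
    - change (sum_f_R0 (fun k => Re (X * q ^ k)%C) 0) with (Re (X * q ^ 0)%C).
      f_equal. rewrite Cpow_1_r. change (q ^ 0)%C with (RtoC 1). field. auto.
    - change (sum_f_R0 (fun k => Re (X * q ^ k)%C) (S n)) with
        (sum_f_R0 (fun k => Re (X * q ^ k)%C) n + Re (X * q ^ (S n))%C).
      rewrite IHn, <- Re_add. f_equal.
      change (q ^ S (S n))%C with (q * q ^ (S n))%C.
      generalize (q ^ S n)%C. intro Q. field. auto. }
  intros eps He.
  set (K := Cmod (X / (1 - q))%C).
  assert (HK : 0 <= K) by apply Cmod_ge_0.
  destruct (pow_lt_1_zero (Cmod q)) with (y := eps / (K + 1)) as [N0 HN].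
  { rewrite Rabs_pos_eq; auto. apply Cmod_ge_0. }
  { apply Rdiv_lt_0_compat; lra. }
  exists N0. intros n Hn. rewrite Hp. unfold Rdist.
  replace (Re (X * (1 - q ^ S n) / (1 - q))%C - Re (X / (1 - q))%C) with
    (Re (- (X / (1 - q) * q ^ S n))%C).
  2:{ rewrite <- Re_minus. f_equal. field. auto. }
  eapply Rle_lt_trans; [apply re_le_Cmod|].
  rewrite Cmod_opp, Cmod_mult, Cmod_pow. fold K.
  specialize (HN (S n) ltac:(lia)). rewrite Rabs_pos_eq in HN by (apply pow_le, Cmod_ge_0).
  assert (0 <= Cmod q ^ S n) by (apply pow_le, Cmod_ge_0).
  apply Rle_lt_trans with ((K + 1) * Cmod q ^ S n). nra.
  apply Rmult_lt_compat_l with (r := K + 1) in HN; [|lra].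
  replace ((K + 1) * (eps / (K + 1))) with eps in HN by (field; lra). exact HN.
Qed.

Lemma key1 (u v s : C) : u <> 0%C -> v <> 0%C -> (1 - u*v)%C <> 0%C -> (u - v)%C <> 0%C ->
  (u*u - 1)%C <> 0%C -> (v*v - 1)%C <> 0%C -> s <> 0%C ->
  (/(u - /u) * /(v - /v) * (u*v) / (1 - u*v) / (1 - u*v) / (s*s)
   + / ((s*((u + /u) - (v + /v))) * ((s*((u + /u) - (v + /v))) * 1)))%C
  = ((u*v)*(u*v) / ((u - v)*(u - v)*(u*u - 1)*(v*v - 1)*(s*s)))%C.
Proof.
  intros Hu Hv H1 H2 H3 H4 Hs. field. cbv beta.
  repeat split; auto.
  - replace ((u * u + 1) * v - (v * v + 1) * u)%C with ((u - v) * - (1 - u*v))%C by ring.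
    apply Cmult_neq_0; auto. intro E. apply H1. replace (1 - u*v)%C with (- - (1 - u*v))%C by ring.
    rewrite E. ring.
Qed.

Lemma key2 (u v s : C) : u <> 0%C -> v <> 0%C -> (1 - u*v)%C <> 0%C ->
  (u*u - 1)%C <> 0%C -> (v*v - 1)%C <> 0%C -> s <> 0%C ->
  (/(u - /u) * /(v - /v) * (u*v) / (1 - u*v) / (1 - u*v) / (s*s))%C
  = ((u*v)*(u*v) / ((u*u - 1)*(v*v - 1)*(1 - u*v)*(1 - u*v)*(s*s)))%C.
Proof. intros. field. cbv beta. repeat split; auto. Qed.

Lemma Re_scal (r : R) (c : C) : Re (RtoC r * c)%C = r * Re c.
Proof. destruct c; unfold Re, RtoC, Cmult; simpl. ring. Qed.

Lemma term_id (s ci cl : R) (A B : C) : s <> 0 ->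
  / s * (ci * Im A) * (/ s * (cl * Im B)) =
  Re (RtoC (ci * cl / (2 * s * s)) * (A * Cconj B))%C +
  Re (RtoC (- (ci * cl / (2 * s * s))) * (A * B))%C.
Proof.
  intro Hs. rewrite !Re_scal. destruct A as [a1 a2]; destruct B as [b1 b2].
  unfold Re, Im, Cmult, Cconj; simpl. field. auto.
Qed.

Lemma Cmod_le_sum (c : C) : Cmod c <= Rabs (Re c) + Rabs (Im c).
Proof.
  destruct c as [a b]. unfold Cmod, Re, Im; simpl.
  rewrite <- (sqrt_Rsqr (Rabs a + Rabs b)) by (pose proof (Rabs_pos a); pose proof (Rabs_pos b); lra).
  apply sqrt_le_1_alt. unfold Rsqr.
  pose proof (Rabs_pos a); pose proof (Rabs_pos b).
  assert (Rabs a * Rabs a = a * a) by (rewrite <- Rabs_mult; apply Rabs_pos_eq; nra).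
  assert (Rabs b * Rabs b = b * b) by (rewrite <- Rabs_mult; apply Rabs_pos_eq; nra).
  nra.
Qed.

Lemma frac_bound (a b1 b2 b3 b4 z : C) (d s : R) : 0 < d -> 0 < s ->
  Cmod a <= 1 -> d <= Cmod b1 -> d <= Cmod b2 -> d <= Cmod b3 -> d <= Cmod b4 ->
  Cmod z = s -> Cmod (a / (b1 * b2 * b3 * b4 * (z * z)))%C <= 1 / (d*d*d*d*(s*s)).
Proof.
  intros Hd Hs Ha H1 H2 H3 H4 Hz.
  assert (Hnz : (b1 * b2 * b3 * b4 * (z * z))%C <> 0%C).
  { apply Cmod_gt_0. rewrite !Cmod_mult, Hz.
    repeat apply Rmult_lt_0_compat; lra. }
  rewrite Cmod_div by auto. rewrite !Cmod_mult, Hz.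
  pose proof (Cmod_ge_0 a).
  assert (P : d*d*d*d*(s*s) <= Cmod b1 * Cmod b2 * Cmod b3 * Cmod b4 * (s * s)).
  { apply Rmult_le_compat_r; [nra|].
    repeat apply Rmult_le_compat; try lra; repeat apply Rmult_le_pos; lra. }
  assert (P0 : 0 < d*d*d*d*(s*s)) by (repeat apply Rmult_lt_0_compat; lra).
  unfold Rdiv. apply Rmult_le_compat; try lra.
  - left; apply Rinv_0_lt_compat; lra.
  - apply Rinv_le_contravar; lra.
Qed.

Lemma one_minus_nz (q : C) : Cmod q < 1 -> (1 - q)%C <> 0%C.
Proof.
  intros Hq E. assert (q = 1%C) by (replace q with (1 - (1 - q))%C by ring; rewrite E; ring).
  subst q. rewrite Cmod_1 in Hq. lra.
Qed.

Lemma n0_ex (S alpha : R) : 0 < S -> 0 < alpha ->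
  exists n0 : nat, forall n, (n0 <= n)%nat -> S <= Rpower (INR n) alpha /\ 0 < INR n.
Proof.
  intros HS Ha. set (T := Rpower S (/ alpha)).
  assert (HT : 0 < T) by (unfold T, Rpower; apply exp_pos).
  destruct (archimed T) as [H1 _].
  assert (Hu : (0 <= up T)%Z) by (apply le_IZR; lra).
  exists (Z.to_nat (up T)). intros n Hn.
  assert (Hn' : T < INR n).
  { apply le_INR in Hn. rewrite INR_IZR_INZ, Z2Nat.id in Hn by auto. lra. }
  split; [|lra].
  replace S with (Rpower T alpha).
  - apply Rle_Rpower_l; lra.
  - unfold T. rewrite Rpower_mult, Rinv_l, Rpower_1; auto; lra.
Qed.

Lemma abs_nat_opp (m : nat) : Z.abs_nat (- Z.of_nat m) = m.
Proof. destruct m as [|m]; [reflexivity|]. simpl. apply SuccNat2Pos.id_succ. Qed.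

Lemma RtoC_split (r s : R) : s <> 0 -> RtoC (r / (2 * s * s)) = (RtoC (r / 2) * / (RtoC s * RtoC s))%C.
Proof.
  intro Hs. unfold RtoC, Cmult, Cinv; simpl. f_equal; field; auto.
Qed.

Lemma Cconj_RtoC (r : R) : Cconj (RtoC r) = RtoC r.
Proof. unfold Cconj, RtoC; simpl. f_equal; ring. Qed.

Lemma nz_of_Cmod (z : C) (d : R) : 0 < d -> d <= Cmod z -> z <> 0%C.
Proof. intros Hd H E. rewrite E, Cmod_0 in H. lra. Qed.

Lemma wmw_nz (w : C) : w <> 0%C -> (1 - w * w)%C <> 0%C -> (w - / w)%C <> 0%C.
Proof.
  intros H1 H2 E. apply H2. replace (1 - w * w)%C with (- (w * (w - / w)))%C by (field; auto).
  rewrite E. ring.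
Qed.

Lemma prod_le1 (a b : R) : 0 <= a <= 1 -> 0 <= b <= 1 -> a * b * (a * b) <= 1.
Proof. intros. assert (0 <= a * b <= 1) by (split; nra). nra. Qed.

Lemma main_core (x0 alpha : R) :
  -2 < x0 < 2 -> 0 < alpha < 1 ->
  forall (N : nat) (M : R), 0 < M ->
  forall eps : R, 0 < eps ->
  exists n0 : nat, forall n : nat, (n0 <= n)%nat ->
  forall (c : nat -> R) (eta : nat -> Cplx),
    (forall j : nat, (j < N)%nat ->
       Rabs (c j) <= M /\ Rabs (Defs.Re (eta j)) <= M /\ / M <= Defs.Im (eta j) <= M) ->
    exists t : R,
      Defs.hankel_trace_is (Defs.phi_n x0 alpha N c eta n) t /\
      Rabs (t - Defs.limit_value N c eta) < eps.
Proof.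
  intros Hx Ha N M HM eps Heps.
  destruct (Dx_sq x0 Hx) as [HD2 HD]. set (D := Dx x0) in *.
  set (K := 16 * INR N * INR N * (M*M) / (D*D*D*D)).
  assert (HK : 0 <= K).
  { unfold K. pose proof (pos_INR N). apply Rmult_le_pos.
    repeat apply Rmult_le_pos; nra. left; apply Rinv_0_lt_compat; repeat apply Rmult_lt_0_compat; lra. }
  set (S0 := 16 * M / (D*D) + K / eps + 1).
  assert (HS1 : 0 <= 16 * M / (D*D)) by (apply Rmult_le_pos; [lra| left; apply Rinv_0_lt_compat; nra]).
  assert (HS2 : 0 <= K / eps) by (apply Rmult_le_pos; [lra| left; apply Rinv_0_lt_compat; lra]).
  destruct (n0_ex S0 alpha ltac:(unfold S0; lra) ltac:(lra)) as [n0 Hn0].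
  exists n0. intros n Hn c eta Hce.
  destruct (Hn0 n Hn) as [HsS _].
  set (s := Rpower (INR n) alpha) in *.
  assert (Hs : 1 <= s) by (unfold S0 in HsS; lra).
  assert (Hs0 : s <> 0) by lra.
  set (sc := RtoC s).
  assert (Hsc : sc <> 0%C) by (unfold sc; intro E; injection E; lra).
  assert (Hmsc : Cmod sc = s) by (unfold sc; rewrite Cmod_R; apply Rabs_pos_eq; lra).
  set (lam := fun j => (RtoC x0 + RtoC (/ s) * eta j)%C).
  assert (Hlam : forall j, Defs.Cadd (Defs.RtoC x0) (Defs.Cscale (/ s) (eta j)) = lam j)
    by (intro; rewrite L_add, L_scale; reflexivity).
  assert (Himl : forall j, (j < N)%nat -> 0 < Im (lam j)).
  { intros j Hj. destruct (Hce j Hj) as [_ [_ [H1 _]]].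
    assert (0 < / M) by (apply Rinv_0_lt_compat; lra).
    assert (0 < / s) by (apply Rinv_0_lt_compat; lra).
    unfold lam, Im, RtoC, Cplus, Cmult; simpl. unfold Defs.Im in H1. nra. }
  assert (Hcl : forall j, (j < N)%nat -> Cmod (lam j - RtoC x0)%C <= D * D / 8).
  { intros j Hj. destruct (Hce j Hj) as [_ [H1 [H2a H2]]].
    replace (lam j - RtoC x0)%C with (RtoC (/ s) * eta j)%C by (unfold lam; ring).
    rewrite Cmod_mult, Cmod_R, Rabs_pos_eq by (left; apply Rinv_0_lt_compat; lra).
    pose proof (Cmod_le_sum (eta j)) as H3. unfold Defs.Re, Defs.Im in *. unfold Re, Im in H3.
    assert (H4 : Rabs (snd (eta j)) <= M) by (rewrite Rabs_pos_eq; pose proof (Rinv_0_lt_compat M HM); lra).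
    assert (H5 : Cmod (eta j) <= 2 * M) by lra.
    assert (H6 : 16 * M / (D*D) <= s) by (unfold S0 in HsS; lra).
    apply Rle_trans with (/ s * (2 * M)).
    - apply Rmult_le_compat_l; [left; apply Rinv_0_lt_compat; lra| lra].
    - apply Rmult_le_reg_l with s; [lra|]. rewrite <- Rmult_assoc, Rinv_r, Rmult_1_l by lra.
      apply Rmult_le_reg_l with (16 / (D*D)). apply Rdiv_lt_0_compat; nra.
      replace (16 / (D * D) * (s * (D * D / 8))) with (2 * s) by (field; lra).
      replace (16 / (D * D) * (2 * M)) with (2 * (16 * M / (D*D))) by (field; lra). lra. }
  set (w := fun j => (Defs.omega (lam j) : C)).
  assert (Hw : forall j, (j < N)%nat ->
     w j <> 0%C /\ lam j = (w j + / w j)%C /\ Im (w j) <= - (D / 4) /\ Cmod (w j) < 1 /\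
     Cmod (w j - om0 x0)%C <= D / 4).
  { intros j Hj. destruct (omega_facts (lam j) (Himl j Hj)) as [H1 [H2 [_ [H4 _]]]].
    destruct (near_facts x0 (lam j) Hx (Himl j Hj) (Hcl j Hj)) as [H5 H6].
    unfold w. repeat split; auto. }
  assert (Hpair : forall i l, (i < N)%nat -> (l < N)%nat -> D / 2 <= Cmod (1 - w i * w l)%C).
  { intros i l Hi Hl. destruct (Hw i Hi) as [_ [_ [_ [Hi1 Hi2]]]]. destruct (Hw l Hl) as [_ [_ [_ [_ Hl2]]]].
    apply pair_bound; auto. lra. }
  set (b := fun j => (/ (w j - / w j))%C).
  assert (Hphi : forall m : nat, Defs.phi_n x0 alpha N c eta n (Z.of_nat m) =
     / s * Defs.fsum N (fun j => c j * Im (w j ^ m * b j)%C)).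
  { intro m. unfold Defs.phi_n. change (Rpower (INR n) alpha) with s. f_equal.
    apply fsum_ext. intros j _. f_equal.
    unfold Defs.a_coef. cbv zeta. rewrite Hlam. rewrite L_div, L_pow, L_sub, L_inv, Zabs2Nat.id.
    reflexivity. }
  assert (Hneg : forall m : nat, Defs.phi_n x0 alpha N c eta n (- Z.of_nat m)%Z =
     Defs.phi_n x0 alpha N c eta n (Z.of_nat m)).
  { intro m. unfold Defs.phi_n, Defs.a_coef. rewrite abs_nat_opp, Zabs2Nat.id. reflexivity. }
  set (X := fun i l => (RtoC (c i * c l / (2 * s * s)) * (b i * Cconj (b l)))%C).
  set (q := fun i l => (w i * Cconj (w l))%C).
  set (Y := fun i l => (RtoC (- (c i * c l / (2 * s * s))) * (b i * b l))%C).
  set (p := fun i l => (w i * w l)%C).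
  assert (HP2 : forall m : nat,
    (/ s * Defs.fsum N (fun j => c j * Im (w j ^ m * b j)%C)) *
    (/ s * Defs.fsum N (fun j => c j * Im (w j ^ m * b j)%C)) =
    Defs.fsum N (fun i => Defs.fsum N (fun l =>
       Re (X i l * q i l ^ m)%C + Re (Y i l * p i l ^ m)%C))).
  { intro m. rewrite !(fsum_scal N (/ s)), fsum_mul. apply fsum_ext. intros i _. apply fsum_ext. intros l _.
    rewrite term_id by auto. unfold X, Y, q, p.
    rewrite !Cpow_mult_l, <- !Cpow_conj, Cmult_conj. f_equal; f_equal; ring. }
  assert (Hq : forall i l, (i < N)%nat -> (l < N)%nat -> Cmod (q i l) < 1 /\ Cmod (p i l) < 1).
  { intros i l Hi Hl. destruct (Hw i Hi) as [_ [_ [_ [H1 _]]]]. destruct (Hw l Hl) as [_ [_ [_ [H2 _]]]].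
    unfold q, p. rewrite !Cmod_mult, Cmod_conj.
    pose proof (Cmod_ge_0 (w i)). pose proof (Cmod_ge_0 (w l)). split; nra. }
  exists (Defs.fsum N (fun i => Defs.fsum N (fun l =>
       Re (X i l * q i l / (1 - q i l) / (1 - q i l))%C + Re (Y i l * p i l / (1 - p i l) / (1 - p i l))%C))).
  split.
  - exists (fun j => Defs.fsum N (fun i => Defs.fsum N (fun l =>
       Re (X i l * q i l ^ S j / (1 - q i l))%C + Re (Y i l * p i l ^ S j / (1 - p i l))%C))).
    split.
    + intro j.
      apply (is_ext (fun k => Defs.fsum N (fun i => Defs.fsum N (fun l =>
         Re ((X i l * q i l ^ S j) * q i l ^ k)%C + Re ((Y i l * p i l ^ S j) * p i l ^ k)%C)))).
      * intro k. rewrite (Nat.add_comm k j), Hneg, Hphi, HP2.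
        apply fsum_ext. intros i _. apply fsum_ext. intros l _.
        replace (j + k + 1)%nat with (S j + k)%nat by lia. rewrite !Cpow_add_r.
        f_equal; f_equal; ring.
      * apply is_fsum; intros i Hi; apply is_fsum; intros l Hl.
        destruct (Hq i l Hi Hl). apply is_plus; apply geom; auto.
    + apply (is_ext (fun j => Defs.fsum N (fun i => Defs.fsum N (fun l =>
         Re ((X i l * q i l / (1 - q i l)) * q i l ^ j)%C + Re ((Y i l * p i l / (1 - p i l)) * p i l ^ j)%C)))).
      * intro j. apply fsum_ext. intros i Hi. apply fsum_ext. intros l Hl.
        destruct (Hq i l Hi Hl) as [H1 H2].
        pose proof (one_minus_nz _ H1). pose proof (one_minus_nz _ H2).
        rewrite !Cpow_S. f_equal; f_equal; field; auto.
      * apply is_fsum; intros i Hi; apply is_fsum; intros l Hl.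
        destruct (Hq i l Hi Hl). apply is_plus; apply geom; auto.
  - set (B1 := 1 / ((D/2)*(D/2)*(D/2)*(D/2)*(s*s))).
    assert (HB1 : 0 <= B1).
    { unfold B1. apply Rmult_le_pos; [lra|]. left; apply Rinv_0_lt_compat.
      repeat apply Rmult_lt_0_compat; lra. }
    unfold Defs.limit_value. rewrite (fsum_scal N (-(1/2))), fsum_minus.
    apply Rle_lt_trans with (INR N * (INR N * (M * M * B1))).
    + apply fsum_bound. intros i Hi. rewrite (fsum_scal N (-(1/2))), fsum_minus.
      apply fsum_bound. intros l Hl.
      rewrite L_inv, L_pow. change (Defs.Csub ?a ?b) with (a - b)%C. change (Defs.Cconj ?a) with (Cconj a). change (Defs.Re ?z) with (Re z).
      destruct (Hw i Hi) as [Hwi0 [Hli [Hwi1 [Hwi2 _]]]].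
      destruct (Hw l Hl) as [Hwl0 [Hll [Hwl1 [Hwl2 _]]]].
      destruct (Hq i l Hi Hl) as [Hq1 Hp1].
      pose proof (one_minus_nz _ Hq1) as Hq1'. pose proof (one_minus_nz _ Hp1) as Hp1'.
      destruct (Hce i Hi) as [Hci _]. destruct (Hce l Hl) as [Hcl' _].
      set (u := w i) in *. set (v := Cconj (w l)).
      set (Dl := (eta i - Cconj (eta l))%C).
      set (E1 := (b i * Cconj (b l) * (u * v) / (1 - u * v) / (1 - u * v) / (sc * sc) + / (Dl ^ 2))%C).
      set (E2 := (b i * b l * p i l / (1 - p i l) / (1 - p i l) / (sc * sc))%C).
      assert (Hv0 : v <> 0%C).
      { intro E. apply Hwl0. rewrite <- (Cconj_conj (w l)). change (Cconj (w l)) with v. rewrite E.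
        apply Cconj_RtoC. }
      assert (HX : (X i l * q i l / (1 - q i l) / (1 - q i l))%C =
                   (RtoC (c i * c l / 2) * (b i * Cconj (b l) * (u * v) / (1 - u * v) / (1 - u * v) / (sc * sc)))%C).
      { unfold X, q. rewrite RtoC_split by auto. fold sc. change (w i) with u. change (Cconj (w l)) with v.
        field. split; auto. }
      assert (HY : (Y i l * p i l / (1 - p i l) / (1 - p i l))%C = (RtoC (- (c i * c l / 2)) * E2)%C).
      { unfold Y, E2. replace (- (c i * c l / (2 * s * s))) with (- (c i * c l) / (2 * s * s)) by (field; auto).
        rewrite RtoC_split by auto. fold sc.
        replace (- (c i * c l) / 2) with (- (c i * c l / 2)) by field. field. auto. }
      rewrite HX, HY, !Re_scal.
      replace (c i * c l / 2 * Re (b i * Cconj (b l) * (u * v) / (1 - u * v) / (1 - u * v) / (sc * sc))%C +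
        - (c i * c l / 2) * Re E2 - - (1 / 2) * (c i * c l * Re (/ Dl ^ 2)%C))
        with (c i * c l / 2 * (Re E1 - Re E2)). 2:{ unfold E1; rewrite Re_add. set (A1 := Re (/ Dl ^ 2)%C). set (A3 := Re E2). set (A2 := Re (b i * Cconj (b l) * (u * v) / (1 - u * v) / (1 - u * v) / (sc * sc))%C). clearbody A1 A2 A3. field. }
      assert (Huu : D / 2 <= Cmod (u * u - 1)%C).
      { replace (u * u - 1)%C with (- (1 - w i * w i))%C by (unfold u; ring).
        rewrite Cmod_opp. apply Hpair; auto. }
      assert (Hvv' : D / 2 <= Cmod (w l * w l - 1)%C).
      { replace (w l * w l - 1)%C with (- (1 - w l * w l))%C by ring.
        rewrite Cmod_opp. apply Hpair; auto. }
      assert (Hvv : D / 2 <= Cmod (v * v - 1)%C).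
      { replace (v * v - 1)%C with (Cconj (w l * w l - 1))%C.
        - rewrite Cmod_conj. auto.
        - unfold v. destruct (w l) as [a1 a2]. unfold Cconj, Cmult, Cminus, Cplus, Copp, RtoC; simpl.
          f_equal; ring. }
      assert (Huv : D / 2 <= Cmod (u - v)%C).
      { eapply Rle_trans; [|apply im_le_Cmod].
        replace (Im (u - v)%C) with (Im u + Im (w l))
          by (unfold v, u; destruct (w i); destruct (w l); unfold Cminus, Cplus, Copp, Cconj, Im; simpl; ring).
        rewrite Rabs_left by lra. lra. }
      assert (Hpl : D / 2 <= Cmod (1 - w i * w l)%C) by (apply Hpair; auto).
      assert (HD2' : 0 < D / 2) by lra.
      assert (Hmv : Cmod v < 1) by (unfold v; rewrite Cmod_conj; auto).
      assert (HE1 : Cmod E1 <= B1).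
      { assert (Hwl' : (w l - / w l)%C <> 0%C).
        { apply wmw_nz; auto. apply (nz_of_Cmod _ (D/2)); auto. }
        assert (Hbl : Cconj (b l) = (/ (v - / v))%C).
        { unfold b, v. rewrite Cinv_conj, Cminus_conj, Cinv_conj; auto. }
        assert (Hcl2 : Cconj (lam l) = (v + / v)%C).
        { rewrite Hll. unfold v. rewrite Cplus_conj, Cinv_conj; auto. }
        assert (HDl : (Dl ^ 2)%C = ((sc * ((u + / u) - (v + / v))) * ((sc * ((u + / u) - (v + / v))) * 1))%C).
        { rewrite <- Hli, <- Hcl2. change (Dl ^ 2)%C with (Dl * (Dl * 1))%C.
          assert (E : Dl = (sc * (lam i - Cconj (lam l)))%C).
          { unfold Dl, sc, lam. destruct (eta i); destruct (eta l).
            unfold Cmult, Cminus, Cplus, Copp, Cconj, RtoC; simpl. f_equal; field; auto. }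
          rewrite E. reflexivity. }
        assert (HE : E1 = ((u*v)*(u*v) / ((u - v)*(u - v)*(u*u - 1)*(v*v - 1)*(sc*sc)))%C).
        { unfold E1. rewrite Hbl, HDl. unfold b. apply key1; auto;
            apply (nz_of_Cmod _ (D/2)); auto. }
        rewrite HE. unfold B1. apply frac_bound; auto; try lra.
        rewrite !Cmod_mult. pose proof (Cmod_ge_0 u). pose proof (Cmod_ge_0 v).
        apply prod_le1; (split; [apply Cmod_ge_0 | left; assumption]). }
      assert (HE2 : Cmod E2 <= B1).
      { assert (HE : E2 = ((w i * w l)*(w i * w l) / ((w i * w i - 1)*(w l * w l - 1)*
                     (1 - w i * w l)*(1 - w i * w l)*(sc*sc)))%C).
        { unfold E2, p, b. apply key2; auto; apply (nz_of_Cmod _ (D/2)); auto. }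
        rewrite HE. unfold B1. apply frac_bound; auto; try lra.
        rewrite !Cmod_mult. pose proof (Cmod_ge_0 (w i)). pose proof (Cmod_ge_0 (w l)).
        apply prod_le1; (split; [apply Cmod_ge_0 | left; assumption]). }
      assert (Hc : Rabs (c i * c l / 2) <= M * M / 2).
      { unfold Rdiv. rewrite !Rabs_mult, (Rabs_pos_eq (/ 2)) by lra.
        pose proof (Rabs_pos (c i)). pose proof (Rabs_pos (c l)). nra. }
      assert (Hr : Rabs (Re E1 - Re E2) <= 2 * B1).
      { unfold Rminus. eapply Rle_trans; [apply Rabs_triang|]. rewrite Rabs_Ropp.
        pose proof (re_le_Cmod E1). pose proof (re_le_Cmod E2). lra. }
      rewrite Rabs_mult.
      apply Rle_trans with ((M * M / 2) * (2 * B1)).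
      * apply Rmult_le_compat; auto using Rabs_pos.
      * lra.
    + assert (HKs : K < eps * s).
      { assert (H1 : K / eps < s) by (unfold S0 in HsS; lra).
        apply Rmult_lt_compat_l with (r := eps) in H1; [|lra].
        replace (eps * (K / eps)) with K in H1 by (field; lra). lra. }
      replace (INR N * (INR N * (M * M * B1))) with (K / (s * s)).
      2:{ unfold K, B1. field. split; lra. }
      apply Rle_lt_trans with (K / s).
      * unfold Rdiv. apply Rmult_le_compat_l; auto.
        apply Rinv_le_contravar; nra.
      * apply Rmult_lt_reg_r with s; [lra|]. unfold Rdiv.
        rewrite Rmult_assoc, Rinv_l, Rmult_1_r by lra. lra.
Qed.
End CX.

Theorem lemma4p6 (x0 alpha : R) :
  -2 < x0 < 2 -> 0 < alpha < 1 ->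
  forall (N : nat) (M : R), 0 < M ->
  forall eps : R, 0 < eps ->
  exists n0 : nat, forall n : nat, (n0 <= n)%nat ->
  forall (c : nat -> R) (eta : nat -> Cplx),
    (forall j : nat, (j < N)%nat ->
       Rabs (c j) <= M /\ Rabs (Re (eta j)) <= M /\ / M <= Im (eta j) <= M) ->
    exists t : R,
      hankel_trace_is (phi_n x0 alpha N c eta n) t /\
      Rabs (t - limit_value N c eta) < eps.
Proof. exact (CX.main_core x0 alpha). Qed.
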